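(* There exist constants $C,K>0$ such that for all $x\in\mathbb Z_{\ge0}$, all integers $N\ge n\ge0$ and all $a\ge0$, $$\sum_{y\ge0}\mathfrak p^N_n(x,y)\,e^{ay}=\mathbf E^N_x[e^{aS_n}]\le C\,e^{ax+Ka^2n}.$$
   Context: Let $p_n(z)$ be the probability that simple symmetric random walk on $\mathbb Z$ started at $0$ is at $z$ at time $n$. For $x,y\in\mathbb Z_{\ge0}$ set $p^{(1/2)}_n(x,y)=p_n(x-y)-p_n(x+y+2)$, $\psi(x;n)=\sum_{y\ge0}p^{(1/2)}_n(x,y)$, and for $0\le n\le N$, $\mathfrak p^N_n(x,y)=p^{(1/2)}_n(x,y)\,\psi(y;N-n)/\psi(x;N)$. $\mathbf P^N_x$ is the uniform probability measure on paths $(s_0,\dots,s_N)\in\mathbb Z_{\ge0}^{N+1}$ with $s_0=x$ and $|s_{i+1}-s_i|=1$; $S$ is its coordinate process and $\mathbf E^N_x$ its expectation (so that $\mathbf P^N_x(S_n=y)=\mathfrak p^N_n(x,y)$). *)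

(* Defs.v *)
From Stdlib Require Import Reals ZArith List.
Import ListNotations.
Open Scope R_scope.

(* p_n(z): probability that simple symmetric random walk on Z started at 0
   is at z at time n, i.e. C(n,(n+z)/2) / 2^n when |z| <= n and n+z even. *)
Definition pSRW (n : nat) (z : Z) : R :=
  if ((Z.abs z <=? Z.of_nat n)%Z && Z.even (Z.of_nat n + z))%bool
  then Binomial.C n (Z.to_nat ((Z.of_nat n + z) / 2)) / 2 ^ n
  else 0.

Definition phalf (n x y : nat) : R :=
  pSRW n (Z.of_nat x - Z.of_nat y)%Z - pSRW n (Z.of_nat x + Z.of_nat y + 2)%Z.

(* psi(x;n) = sum_{y>=0} p^{(1/2)}_n(x,y).  The terms vanish for y > x+n
   (both |x-y| > n and x+y+2 > n), so the series is the finite sum over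
   y = 0 .. x+n. *)
Definition psi (x n : nat) : R :=
  sum_f_R0 (fun y => phalf n x y) (x + n).

Definition pfrak (N n x y : nat) : R :=
  phalf n x y * psi y (N - n) / psi x N.

Fixpoint all_steps (N : nat) : list (list Z) :=
  match N with
  | O => [ [] ]
  | S k => flat_map (fun l => [ (1 :: l)%Z ; (-1 :: l)%Z ]) (all_steps k)
  end.

Fixpoint nonneg_path (x : Z) (steps : list Z) : bool :=
  ((0 <=? x)%Z && match steps with
                  | [] => true
                  | s :: r => nonneg_path (x + s)%Z r
                  end)%bool.

Definition pos_at (x : Z) (steps : list Z) (n : nat) : Z :=
  (x + fold_right Z.add 0 (firstn n steps))%Z.

(* Admissible paths (s_0,...,s_N) in Z_{>=0}^{N+1} with s_0 = x and
   |s_{i+1}-s_i| = 1, encoded by their step sequences. *)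
Definition adm_paths (N : nat) (x : Z) : list (list Z) :=
  filter (nonneg_path x) (all_steps N).

(* E^N_x[f(S_n)] under the uniform probability measure P^N_x on admissible paths. *)
Definition EN (N : nat) (x : nat) (n : nat) (f : Z -> R) : R :=
  fold_right Rplus 0 (map (fun st => f (pos_at (Z.of_nat x) st n))
                          (adm_paths N (Z.of_nat x)))
  / INR (length (adm_paths N (Z.of_nat x))).

(* Main.v *)
Require Import Defs.
From Stdlib Require Import Reals ZArith List Lia Lra Classical.
Open Scope R_scope.

Definition repr (n : nat) (z : Z) := exists k, (k <= n)%nat /\ z = (2 * Z.of_nat k - Z.of_nat n)%Z.

Lemma pSRW_val n k : (k <= n)%nat -> pSRW n (2 * Z.of_nat k - Z.of_nat n)%Z = Binomial.C n k / 2 ^ n.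
Proof.
  intros Hk. unfold pSRW.
  replace ((Z.abs (2 * Z.of_nat k - Z.of_nat n) <=? Z.of_nat n)%Z) with true by (symmetry; apply Z.leb_le; lia).
  replace (Z.of_nat n + (2 * Z.of_nat k - Z.of_nat n))%Z with (Z.of_nat k * 2)%Z by ring.
  rewrite Z.even_mul. rewrite Bool.orb_true_r. simpl.
  rewrite Z.div_mul by lia. rewrite Nat2Z.id. reflexivity.
Qed.

Lemma pSRW_zero n z : ~ repr n z -> pSRW n z = 0.
Proof.
  intros H. unfold pSRW.
  destruct (Z.abs z <=? Z.of_nat n)%Z eqn:E1; simpl; auto.
  destruct (Z.even (Z.of_nat n + z)) eqn:E2; auto.
  exfalso. apply Z.leb_le in E1. apply Z.even_spec in E2. destruct E2 as [m Hm].
  apply H. exists (Z.to_nat m). split; lia.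
Qed.

Lemma C_n_0 n : Binomial.C n 0 = 1.
Proof. unfold Binomial.C. rewrite Nat.sub_0_r. simpl fact. rewrite INR_1. field. apply INR_fact_neq_0. Qed.
Lemma C_n_n n : Binomial.C n n = 1.
Proof. unfold Binomial.C. rewrite Nat.sub_diag. simpl fact. rewrite INR_1. field. apply INR_fact_neq_0. Qed.

Lemma pSRW_pascal n z : pSRW (S n) z = (pSRW n (z - 1) + pSRW n (z + 1)) / 2.
Proof.
  destruct (classic (repr (S n) z)) as [[k [Hk Hz]]|Hn].
  - subst z. destruct k as [|j].
    + replace (2 * Z.of_nat 0 - Z.of_nat (S n) + 1)%Z with (2 * Z.of_nat 0 - Z.of_nat n)%Z by lia.
      rewrite (pSRW_zero n (_ - 1)%Z). 2:{ intros [k [Hk' Hz]]. lia. }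
      rewrite !pSRW_val by lia. rewrite !C_n_0. simpl. field; apply pow_nonzero; lra.
    + destruct (Nat.eq_dec j n) as [->|Hjn].
      * replace (2 * Z.of_nat (S n) - Z.of_nat (S n))%Z with (2 * Z.of_nat (S n) - Z.of_nat (S n))%Z by lia.
        rewrite (pSRW_val (S n) (S n)) by lia.
        replace (2 * Z.of_nat (S n) - Z.of_nat (S n) - 1)%Z with (2 * Z.of_nat n - Z.of_nat n)%Z by lia.
        rewrite pSRW_val by lia.
        rewrite (pSRW_zero n). 2:{ intros [k [Hk' Hz]]. lia. }
        rewrite !C_n_n. simpl. field; apply pow_nonzero; lra.
      * rewrite pSRW_val by lia.
        replace (2 * Z.of_nat (S j) - Z.of_nat (S n) - 1)%Z with (2 * Z.of_nat j - Z.of_nat n)%Z by lia.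
        replace (2 * Z.of_nat (S j) - Z.of_nat (S n) + 1)%Z with (2 * Z.of_nat (S j) - Z.of_nat n)%Z by lia.
        rewrite !pSRW_val by lia.
        rewrite <- pascal by lia. simpl. field; apply pow_nonzero; lra.
  - rewrite (pSRW_zero (S n)) by auto.
    rewrite (pSRW_zero n (z-1)). 2:{ intros [k [Hk Hz]]. apply Hn. exists (S k). split; lia. }
    rewrite (pSRW_zero n (z+1)). 2:{ intros [k [Hk Hz]]. apply Hn. exists k. split; lia. }
    lra.
Qed.

Lemma pSRW_sym n z : pSRW n (- z) = pSRW n z.
Proof.
  destruct (classic (repr n z)) as [[k [Hk Hz]]|Hn].
  - subst z. replace (- (2 * Z.of_nat k - Z.of_nat n))%Z with (2 * Z.of_nat (n - k) - Z.of_nat n)%Z by lia.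
    rewrite !pSRW_val by lia. rewrite <- pascal_step1 by lia. reflexivity.
  - rewrite (pSRW_zero n z) by auto. apply pSRW_zero.
    intros [k [Hk Hz]]. apply Hn. exists (n - k)%nat. split; lia.
Qed.

Lemma exp_le' x y : x <= y -> exp x <= exp y.
Proof. intros H. destruct H as [H|H]. left; apply exp_increasing; auto. rewrite H; lra. Qed.

Definition ph (n : nat) (x : Z) (y : nat) : R :=
  pSRW n (x - Z.of_nat y)%Z - pSRW n (x + Z.of_nat y + 2)%Z.

Lemma ph_rec n x y : ph (S n) x y = (ph n (x + 1) y + ph n (x - 1) y) / 2.
Proof.
  unfold ph. rewrite !pSRW_pascal.
  replace (x + 1 - Z.of_nat y)%Z with (x - Z.of_nat y + 1)%Z by ring.
  replace (x - 1 - Z.of_nat y)%Z with (x - Z.of_nat y - 1)%Z by ring.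
  replace (x + 1 + Z.of_nat y + 2)%Z with (x + Z.of_nat y + 2 + 1)%Z by ring.
  replace (x - 1 + Z.of_nat y + 2)%Z with (x + Z.of_nat y + 2 - 1)%Z by ring.
  lra.
Qed.

Lemma ph_m1 n y : ph n (-1) y = 0.
Proof.
  unfold ph. replace (-1 - Z.of_nat y)%Z with (- (-1 + Z.of_nat y + 2))%Z by ring.
  rewrite pSRW_sym. lra.
Qed.

Lemma pSRW_0_0 : pSRW 0 0 = 1.
Proof. pose proof (pSRW_val 0 0 (le_n 0)) as H. simpl in H. rewrite H, C_n_0. lra. Qed.
Lemma pSRW_0_nz z : z <> 0%Z -> pSRW 0 z = 0.
Proof. intros H. apply pSRW_zero. intros [k [Hk Hz]]. lia. Qed.

Lemma ph_0 (x y : nat) : ph 0 (Z.of_nat x) y = if Nat.eq_dec y x then 1 else 0.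
Proof.
  unfold ph. rewrite (pSRW_0_nz (_ + _ + 2)) by lia.
  destruct (Nat.eq_dec y x).
  - subst. replace (Z.of_nat x - Z.of_nat x)%Z with 0%Z by ring. rewrite pSRW_0_0. lra.
  - rewrite pSRW_0_nz by lia. lra.
Qed.

Lemma ph_nonneg n : forall x y, (-1 <= x)%Z -> 0 <= ph n x y.
Proof.
  induction n; intros x y Hx.
  - destruct (Z.eq_dec x (-1)) as [->|Hne]. rewrite ph_m1; lra.
    replace x with (Z.of_nat (Z.to_nat x)) by lia. rewrite ph_0. destruct Nat.eq_dec; lra.
  - destruct (Z.eq_dec x (-1)) as [->|Hne]. rewrite ph_m1; lra.
    rewrite ph_rec. assert (0 <= ph n (x+1) y) by (apply IHn; lia).
    assert (0 <= ph n (x-1) y) by (apply IHn; lia). lra.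
Qed.

Lemma sum_zero_upto (f : nat -> R) M : (forall y, (y <= M)%nat -> f y = 0) -> sum_f_R0 f M = 0.
Proof. intros Hf. induction M. simpl; apply Hf; lia. rewrite tech5, IHM. rewrite Hf by lia. lra. intros; apply Hf; lia. Qed.

Lemma sum_zero (f : nat -> R) M : (forall y, f y = 0) -> sum_f_R0 f M = 0.
Proof. intros Hf. apply sum_zero_upto. auto. Qed.

Lemma sum_single (f : nat -> R) k M : (k <= M)%nat -> (forall y, y <> k -> f y = 0) -> sum_f_R0 f M = f k.
Proof.
  intros Hk Hf. induction M.
  - assert (k = 0)%nat by lia. subst. reflexivity.
  - destruct (Nat.eq_dec k (S M)).
    + subst. rewrite tech5. rewrite sum_zero_upto. lra. intros; apply Hf; lia.
    + rewrite tech5, IHM by lia. rewrite (Hf (S M)) by lia. lra.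
Qed.

Fixpoint Free (n : nat) (h : Z -> R) (z : Z) : R :=
  match n with
  | O => h z
  | S m => Free m h (z + 1) + Free m h (z - 1)
  end.

Lemma Free_antisym n h : (forall z, h (-2 - z)%Z = - h z) -> forall z, Free n h (-2 - z)%Z = - Free n h z.
Proof.
  intros Hh. induction n; intros z; cbn [Free]. apply Hh.
  replace (-2 - z + 1)%Z with (-2 - (z - 1))%Z by ring.
  replace (-2 - z - 1)%Z with (-2 - (z + 1))%Z by ring.
  rewrite !IHn. lra.
Qed.

Lemma Free_odd n h : (forall z, h (- z)%Z = - h z) -> forall z, Free n h (- z)%Z = - Free n h z.
Proof.
  intros Hh. induction n; intros z; cbn [Free]. apply Hh.
  replace (- z + 1)%Z with (- (z - 1))%Z by ring.
  replace (- z - 1)%Z with (- (z + 1))%Z by ring.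
  rewrite !IHn. lra.
Qed.

Lemma Free_shift n h c : forall x, Free n (fun z => h (z + c)%Z) x = Free n h (x + c)%Z.
Proof.
  induction n; intros x; cbn [Free]. reflexivity.
  rewrite !IHn. f_equal; f_equal; ring.
Qed.

Lemma Free_ext n h1 h2 : (forall z, h1 z = h2 z) -> forall x, Free n h1 x = Free n h2 x.
Proof. intros H; induction n; intros x; simpl; auto. rewrite !IHn. auto. Qed.

Lemma Free_le n h1 h2 : (forall z, h1 z <= h2 z) -> forall x, Free n h1 x <= Free n h2 x.
Proof. intros H; induction n; intros x; simpl; auto. pose proof (IHn (x+1)%Z). pose proof (IHn (x-1)%Z). lra. Qed.

Lemma sum_half (A B : nat -> R) M :
  sum_f_R0 (fun y => (A y + B y) / 2) M = (sum_f_R0 A M + sum_f_R0 B M) / 2.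
Proof. induction M; simpl. lra. rewrite IHM. lra. Qed.

Lemma Free_m1 n h : (forall z, h (-2 - z)%Z = - h z) -> Free n h (-1)%Z = 0.
Proof. intros Hh. pose proof (Free_antisym n h Hh (-1)%Z) as H. replace (-2 - -1)%Z with (-1)%Z in H by ring. lra. Qed.

Lemma sum_ph (Psi : Z -> R) (HP : forall z, Psi (-2 - z)%Z = - Psi z) M :
  forall n x, (-1 <= x)%Z -> (x + Z.of_nat n <= Z.of_nat M)%Z ->
  sum_f_R0 (fun y => ph n x y * Psi (Z.of_nat y)) M = Free n Psi x / 2 ^ n.
Proof.
  induction n; intros x Hx HM.
  - destruct (Z.eq_dec x (-1)) as [->|Hne].
    + rewrite sum_zero. rewrite Free_m1 by auto. lra. intros; rewrite ph_m1; lra.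
    + replace x with (Z.of_nat (Z.to_nat x)) by lia.
      rewrite (sum_single _ (Z.to_nat x)). rewrite ph_0. destruct Nat.eq_dec; [|congruence]. simpl. lra.
      lia. intros y Hy. rewrite ph_0. destruct Nat.eq_dec; [congruence|]. lra.
  - destruct (Z.eq_dec x (-1)) as [->|Hne].
    + rewrite sum_zero. rewrite Free_m1 by auto. lra. intros; rewrite ph_m1; lra.
    + rewrite (sum_eq _ (fun y => (ph n (x+1) y * Psi (Z.of_nat y) + ph n (x-1) y * Psi (Z.of_nat y)) / 2)).
      2:{ intros; rewrite ph_rec; lra. }
      rewrite sum_half. rewrite !IHn by lia. cbn [Free]. simpl pow. field. apply pow_nonzero; lra.
Qed.

Definition SF (F : list Z -> R) (l : list (list Z)) : R := fold_right Rplus 0 (map F l).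
Definition T (N : nat) (x : Z) (n : nat) (f : Z -> R) : R := SF (fun st => f (pos_at x st n)) (adm_paths N x).
Definition L (N : nat) (x : Z) : R := SF (fun _ => 1) (adm_paths N x).

Lemma SF_ext F G l : (forall s, F s = G s) -> SF F l = SF G l.
Proof. intros H; induction l; simpl; auto. unfold SF in *; simpl. rewrite H, IHl. auto. Qed.

Lemma adm_S F k x : SF F (adm_paths (S k) x) =
  if (0 <=? x)%Z then SF (fun l => F (1%Z :: l)) (adm_paths k (x + 1)) + SF (fun l => F ((-1)%Z :: l)) (adm_paths k (x - 1)) else 0.
Proof.
  unfold adm_paths. simpl all_steps. generalize (all_steps k) as ls. induction ls as [|a ls IH].
  - simpl. destruct (0 <=? x)%Z; unfold SF; simpl; lra.
  - simpl. unfold SF in *. simpl in *.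
    replace (x + -1)%Z with (x - 1)%Z by ring.
    destruct (0 <=? x)%Z eqn:E; simpl.
    + destruct (nonneg_path (x+1) a); destruct (nonneg_path (x-1) a); simpl; rewrite IH; lra.
    + exact IH.
Qed.

Lemma adm_neg N x : (x < 0)%Z -> adm_paths N x = nil.
Proof.
  intros Hx. unfold adm_paths. generalize (all_steps N). induction l; simpl; auto.
  destruct a; simpl; replace (0 <=? x)%Z with false by (symmetry; apply Z.leb_gt; lia); simpl; auto.
Qed.

Lemma L_neg N x : (x < 0)%Z -> L N x = 0.
Proof. intros; unfold L; rewrite adm_neg; auto. Qed.

Lemma L_S k x : L (S k) x = if (0 <=? x)%Z then L k (x + 1) + L k (x - 1) else 0.
Proof. unfold L. rewrite adm_S. reflexivity. Qed.

Lemma L_0 x : (0 <= x)%Z -> L 0 x = 1.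
Proof. intros. unfold L, adm_paths. simpl. replace (0 <=? x)%Z with true by (symmetry; apply Z.leb_le; lia). unfold SF; simpl. lra. Qed.

Lemma L_nonneg N x : 0 <= L N x.
Proof. unfold L, SF. generalize (adm_paths N x). induction l; simpl; lra. Qed.

Lemma L_pos N x : (0 <= x)%Z -> 1 <= L N x.
Proof.
  revert x; induction N; intros x Hx. rewrite L_0 by lia; lra.
  rewrite L_S. replace (0 <=? x)%Z with true by (symmetry; apply Z.leb_le; lia).
  pose proof (IHN (x+1)%Z ltac:(lia)). pose proof (L_nonneg N (x-1)). lra.
Qed.

Lemma T_S k x n f : T (S k) x (S n) f = if (0 <=? x)%Z then T k (x + 1) n f + T k (x - 1) n f else 0.
Proof.
  unfold T. rewrite adm_S. destruct (0 <=? x)%Z; auto.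
  f_equal; apply SF_ext; intros s; unfold pos_at; cbn [firstn fold_right]; apply f_equal; ring.
Qed.

Lemma T_0 N x f : T N x 0 f = f x * L N x.
Proof.
  unfold T, L, SF. generalize (adm_paths N x). induction l; simpl. lra.
  rewrite IHl. unfold pos_at; simpl. rewrite Z.add_0_r. lra.
Qed.

Lemma claim n : forall N x M f, (n <= N)%nat -> (-1 <= x)%Z -> (x + Z.of_nat n <= Z.of_nat M)%Z ->
  T N x n f = sum_f_R0 (fun y => 2 ^ n * ph n x y * L (N - n) (Z.of_nat y) * f (Z.of_nat y)) M.
Proof.
  induction n; intros N x M f HN Hx HM.
  - rewrite T_0. rewrite Nat.sub_0_r.
    destruct (Z.eq_dec x (-1)) as [->|Hne].
    + rewrite L_neg by lia. rewrite sum_zero. lra. intros; rewrite ph_m1; lra.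
    + replace x with (Z.of_nat (Z.to_nat x)) by lia.
      rewrite (sum_single _ (Z.to_nat x)). rewrite ph_0. destruct Nat.eq_dec; [|congruence]. simpl. lra.
      lia. intros y Hy. rewrite ph_0. destruct Nat.eq_dec; [congruence|]. lra.
  - destruct N as [|k]. lia.
    rewrite T_S. destruct (Z.eq_dec x (-1)) as [->|Hne].
    + simpl. rewrite sum_zero. lra. intros; rewrite ph_m1; lra.
    + replace (0 <=? x)%Z with true by (symmetry; apply Z.leb_le; lia).
      rewrite !(IHn k _ M f) by lia.
      rewrite <- plus_sum. apply sum_eq. intros y _. rewrite ph_rec. simpl (S k - S n)%nat. simpl pow. lra.
Qed.

Lemma L_concave m : forall z, (0 <= z)%Z -> L m (z + 1) + L m (z - 1) <= 2 * L m z.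
Proof.
  induction m; intros z Hz.
  - rewrite (L_0 (z+1)) by lia. rewrite (L_0 z) by lia. destruct (Z.eq_dec z 0) as [->|Hn].
    + rewrite (L_neg 0 (0 - 1)) by lia. lra.
    + rewrite (L_0 (z - 1)) by lia. lra.
  - rewrite !L_S.
    replace (0 <=? z + 1)%Z with true by (symmetry; apply Z.leb_le; lia).
    replace (0 <=? z)%Z with true by (symmetry; apply Z.leb_le; lia).
    destruct (Z.eq_dec z 0) as [Hz0|Hn].
    + replace (0 <=? z - 1)%Z with false by (symmetry; apply Z.leb_gt; lia).
      rewrite (L_neg m (z - 1)) by lia.
      pose proof (IHm (z+1)%Z ltac:(lia)). lra.
    + replace (0 <=? z - 1)%Z with true by (symmetry; apply Z.leb_le; lia).
      pose proof (IHm (z+1)%Z ltac:(lia)). pose proof (IHm (z-1)%Z ltac:(lia)). lra.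
Qed.

Lemma L_ratio m (y : nat) : (INR y + 1) * L m (Z.of_nat y + 1) <= (INR y + 2) * L m (Z.of_nat y).
Proof.
  induction y.
  - pose proof (L_concave m 0 ltac:(lia)) as H. rewrite (L_neg m (0 - 1)) in H by lia.
    simpl INR. replace (Z.of_nat 0) with 0%Z by reflexivity. lra.
  - replace (Z.of_nat (S y)) with (Z.of_nat y + 1)%Z by lia. rewrite S_INR.
    pose proof (L_concave m (Z.of_nat y + 1) ltac:(lia)) as H.
    replace (Z.of_nat y + 1 - 1)%Z with (Z.of_nat y) in H by ring.
    pose proof (pos_INR y).
    assert ((INR y + 2) * (L m (Z.of_nat y + 1 + 1) + L m (Z.of_nat y)) <= (INR y + 2) * (2 * L m (Z.of_nat y + 1)))
      by (apply Rmult_le_compat_l; lra).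
    lra.
Qed.

Definition ell m (y : nat) := L m (Z.of_nat y) / (INR y + 1).

Lemma ell_step m y : ell m (S y) <= ell m y.
Proof.
  unfold ell. pose proof (L_ratio m y). pose proof (pos_INR y).
  replace (Z.of_nat (S y)) with (Z.of_nat y + 1)%Z by lia. rewrite S_INR.
  apply (Rmult_le_reg_r ((INR y + 1) * (INR y + 1 + 1))). nra.
  field_simplify; try lra. 
Qed.

Lemma ell_mono m i j : (i <= j)%nat -> ell m j <= ell m i.
Proof.
  induction 1. lra. pose proof (ell_step m m0). lra.
Qed.

Lemma sum_expand (w l g : nat -> R) c d M :
  sum_f_R0 (fun i => w i * (l i - c) * (g i - d)) M =
  sum_f_R0 (fun i => w i * l i * g i) M - d * sum_f_R0 (fun i => w i * l i) M
  - c * sum_f_R0 (fun i => w i * g i) M + c * d * sum_f_R0 w M.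
Proof. induction M; simpl. ring. rewrite IHM. ring. Qed.

Lemma sum_nonpos (f : nat -> R) M : (forall i, (i <= M)%nat -> f i <= 0) -> sum_f_R0 f M <= 0.
Proof. intros H. induction M; simpl. apply H; lia. pose proof (H (S M) (le_n _)). assert (sum_f_R0 f M <= 0) by (apply IHM; intros; apply H; lia). lra. Qed.

Lemma cheb M (w l g : nat -> R) :
  (forall i, (i <= M)%nat -> 0 <= w i) ->
  (forall i j, (i <= j)%nat -> (j <= M)%nat -> l j <= l i) ->
  (forall i j, (i <= j)%nat -> (j <= M)%nat -> g i <= g j) ->
  sum_f_R0 (fun i => w i * l i * g i) M * sum_f_R0 w M <=
  sum_f_R0 (fun i => w i * g i) M * sum_f_R0 (fun i => w i * l i) M.
Proof.
  induction M; intros Hw Hl Hg.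
  - simpl. nra.
  - simpl.
    assert (IH : sum_f_R0 (fun i => w i * l i * g i) M * sum_f_R0 w M <=
       sum_f_R0 (fun i => w i * g i) M * sum_f_R0 (fun i => w i * l i) M).
    { apply IHM; intros; [apply Hw|apply Hl|apply Hg]; lia. }
    assert (K : sum_f_R0 (fun i => w i * (l i - l (S M)) * (g i - g (S M))) M <= 0).
    { apply sum_nonpos. intros i Hi. pose proof (Hw i ltac:(lia)). pose proof (Hl i (S M) ltac:(lia) ltac:(lia)).
      pose proof (Hg i (S M) ltac:(lia) ltac:(lia)).
      assert (0 <= w i * (l i - l (S M))) by (apply Rmult_le_pos; lra).
      assert (w i * (l i - l (S M)) * (g (S M) - g i) >= 0) by (apply Rle_ge, Rmult_le_pos; lra).
      lra. }
    rewrite sum_expand in K.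
    set (s1 := sum_f_R0 (fun i => w i * l i * g i) M) in *.
    set (s0 := sum_f_R0 w M) in *.
    set (s2 := sum_f_R0 (fun i => w i * g i) M) in *.
    set (s3 := sum_f_R0 (fun i => w i * l i) M) in *.
    pose proof (Hw (S M) (le_n _)).
    assert (0 <= w (S M) * - (s1 - g (S M) * s3 - l (S M) * s2 + l (S M) * g (S M) * s0)) by (apply Rmult_le_pos; lra).
    assert (E : (s2 + w (S M) * g (S M)) * (s3 + w (S M) * l (S M)) - (s1 + w (S M) * l (S M) * g (S M)) * (s0 + w (S M))
       = (s2 * s3 - s1 * s0) - w (S M) * (s1 - g (S M) * s3 - l (S M) * s2 + l (S M) * g (S M) * s0)) by ring.
    lra.
Qed.

Lemma cosh_bound t : 0 <= t -> exp t + exp (- t) <= 2 * exp (2 * t ^ 2).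
Proof.
  intros Ht. pose proof (exp_ineq1_le (2 * t ^ 2)) as H2.
  destruct (Rle_lt_dec (1/2) t) as [Hb|Hs].
  - assert (exp (-t) <= exp t) by (apply exp_le'; lra).
    assert (exp t <= exp (2 * t ^ 2)) by (apply exp_le'; nra). lra.
  - pose proof (exp_ineq1_le (- t)) as H1. pose proof (exp_ineq1_le t) as H3.
    assert (Hp : exp t * exp (- t) = 1) by (rewrite <- exp_plus; replace (t + - t) with 0 by ring; apply exp_0).
    pose proof (exp_pos t). pose proof (exp_pos (-t)).
    assert (A1 : exp t * (1 - t) <= 1) by nra.
    assert (B1 : exp (- t) * (1 + t) <= 1) by nra.
    assert (A2 : exp t <= 1 + t + 2 * t ^ 2).
    { assert ((exp t - (1 + t + 2 * t^2)) * (1 - t) <= 0) by nra. nra. }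
    assert (B2 : exp (- t) <= 1 - t + t ^ 2).
    { assert ((exp (-t) - (1 - t + t^2)) * (1 + t) <= 0) by nra. nra. }
    nra.
Qed.

Lemma exp_pow_n c n : exp c ^ n = exp (c * INR n).
Proof. induction n. simpl. rewrite Rmult_0_r, exp_0. auto. rewrite S_INR. simpl. rewrite IHn, <- exp_plus. f_equal; ring. Qed.

Lemma Free_exp t n : forall x, Free n (fun z => exp (t * IZR z)) x = exp (t * IZR x) * (exp t + exp (- t)) ^ n.
Proof.
  induction n; intros x; cbn [Free]. simpl; ring.
  rewrite !IHn. rewrite plus_IZR, minus_IZR.
  replace (t * (IZR x + 1)) with (t * IZR x + t) by ring.
  replace (t * (IZR x - 1)) with (t * IZR x + - t) by ring.
  rewrite !exp_plus. simpl. ring.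
Qed.

Lemma Free_add n h1 h2 : forall x, Free n (fun z => h1 z + h2 z) x = Free n h1 x + Free n h2 x.
Proof. induction n; intros x; cbn [Free]. auto. rewrite !IHn. ring. Qed.

Lemma Free_scal n c h : forall x, Free n (fun z => c * h z) x = c * Free n h x.
Proof. induction n; intros x; cbn [Free]. auto. rewrite !IHn. ring. Qed.

Lemma Free_lin1 n : forall x, Free n (fun z => IZR z + 1) x = 2 ^ n * (IZR x + 1).
Proof. induction n; intros x; cbn [Free]. simpl; ring. rewrite !IHn, plus_IZR, minus_IZR. simpl. ring. Qed.

Lemma ptwise a X u : 0 <= a -> 0 <= X ->
  u * exp (a * Rabs u) <= X * (exp (a * u) + exp (- (a * u))) + (u - X) * exp (a * Rabs (u - X))
     + X * exp (a * X) * (exp (2 * a * (u - X)) + exp (- (2 * a * (u - X)))).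
Proof.
  intros Ha HX.
  set (v := Rabs (u - X)).
  assert (Hv : 0 <= v) by apply Rabs_pos.
  assert (S2 : exp (a * Rabs u) <= exp (a * u) + exp (- (a * u))).
  { pose proof (exp_pos (a*u)). pose proof (exp_pos (-(a*u))).
    destruct (Rle_dec 0 u). rewrite Rabs_right by lra. lra. rewrite Rabs_left by lra.
    replace (a * - u) with (- (a * u)) by ring. lra. }
  assert (Hu1 : Rabs u <= v + X).
  { unfold v. replace u with ((u - X) + X) at 1 by ring. eapply Rle_trans. apply Rabs_triang. rewrite (Rabs_right X) by lra. lra. }
  assert (Hu2 : v - X <= Rabs u).
  { unfold v. replace (u - X) with (u + - X) by ring. eapply Rle_trans. apply Rplus_le_compat_r. apply Rabs_triang. rewrite Rabs_Ropp, (Rabs_right X) by lra. lra. }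
  assert (Up : exp (a * Rabs u) <= exp (a * v) * exp (a * X)).
  { rewrite <- exp_plus. apply exp_le'. nra. }
  assert (Lo : exp (a * v) * exp (- (a * X)) <= exp (a * Rabs u)).
  { rewrite <- exp_plus. apply exp_le'. nra. }
  assert (HeX : 1 <= exp (a * X)) by (rewrite <- exp_0; apply exp_le'; nra).
  assert (HemX : exp (- (a * X)) <= 1) by (rewrite <- exp_0; apply exp_le'; nra).
  pose proof (exp_pos (a * v)) as Hev.
  assert (Hd : Rabs (exp (a * Rabs u) - exp (a * v)) <= exp (a * v) * (exp (a * X) - 1)).
  { apply Rabs_le. split.
    - assert (1 - exp (- (a * X)) <= exp (a * X) - 1).
      { assert (exp (a * X) * exp (- (a * X)) = 1) by (rewrite <- exp_plus; replace (a * X + - (a * X)) with 0 by ring; apply exp_0).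
        pose proof (exp_pos (- (a * X))). nra. }
      nra.
    - nra. }
  assert (S3 : (u - X) * (exp (a * Rabs u) - exp (a * v)) <= v * (exp (a * v) * (exp (a * X) - 1))).
  { eapply Rle_trans. apply Rle_abs. rewrite Rabs_mult. apply Rmult_le_compat_l. apply Rabs_pos. exact Hd. }
  assert (E1 : exp (a * X) - 1 <= a * X * exp (a * X)).
  { pose proof (exp_ineq1_le (- (a * X))).
    assert (exp (a * X) * exp (- (a * X)) = 1) by (rewrite <- exp_plus; replace (a * X + - (a * X)) with 0 by ring; apply exp_0).
    pose proof (exp_pos (a * X)). nra. }
  assert (E2 : a * v * exp (a * v) <= exp (2 * a * v)).
  { pose proof (exp_ineq1_le (a * v)). replace (2 * a * v) with (a * v + a * v) by ring. rewrite exp_plus. nra. }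
  assert (E3 : exp (2 * a * v) <= exp (2 * a * (u - X)) + exp (- (2 * a * (u - X)))).
  { pose proof (exp_pos (2 * a * (u - X))). pose proof (exp_pos (- (2 * a * (u - X)))). unfold v.
    destruct (Rle_dec 0 (u - X)). rewrite Rabs_right by lra. lra. rewrite Rabs_left by lra.
    replace (2 * a * - (u - X)) with (- (2 * a * (u - X))) by ring. lra. }
  assert (S4 : v * (exp (a * v) * (exp (a * X) - 1)) <= X * exp (a * X) * (exp (2 * a * (u - X)) + exp (- (2 * a * (u - X))))).
  { assert (v * (exp (a * v) * (exp (a * X) - 1)) <= v * exp (a * v) * (a * X * exp (a * X))).
    { rewrite <- Rmult_assoc. apply Rmult_le_compat_l. apply Rmult_le_pos; lra. exact E1. }
    assert (v * exp (a * v) * (a * X * exp (a * X)) = X * exp (a * X) * (a * v * exp (a * v))) by ring.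
    assert (0 <= X * exp (a * X)) by (apply Rmult_le_pos; lra).
    assert (X * exp (a * X) * (a * v * exp (a * v)) <= X * exp (a * X) * exp (2 * a * v)) by (apply Rmult_le_compat_l; lra).
    assert (X * exp (a * X) * exp (2 * a * v) <= X * exp (a * X) * (exp (2 * a * (u - X)) + exp (- (2 * a * (u - X))))) by (apply Rmult_le_compat_l; lra).
    lra. }
  assert (X * exp (a * Rabs u) <= X * (exp (a * u) + exp (- (a * u)))) by (apply Rmult_le_compat_l; lra).
  assert (u * exp (a * Rabs u) = X * exp (a * Rabs u) + (u - X) * exp (a * v) + (u - X) * (exp (a * Rabs u) - exp (a * v))) by ring.
  lra.
Qed.

Lemma pow_bound t n : 0 <= t -> (exp t + exp (- t)) ^ n <= 2 ^ n * exp (2 * t ^ 2 * INR n).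
Proof.
  intros Ht. rewrite <- exp_pow_n, <- Rpow_mult_distr. apply pow_incr. split.
  pose proof (exp_pos t); pose proof (exp_pos (-t)); lra. apply cosh_bound; auto.
Qed.

Lemma Free_G a n X : 0 <= a -> (0 <= X)%Z ->
  Free n (fun z => IZR z * exp (a * Rabs (IZR z))) X <= 4 * IZR X * exp (a * IZR X) * (2 ^ n * exp (8 * a ^ 2 * INR n)).
Proof.
  intros Ha HX. set (Xr := IZR X).
  assert (HXr : 0 <= Xr) by (apply IZR_le; lia).
  set (Od := fun z => (IZR z - Xr) * exp (a * Rabs (IZR z - Xr))).
  assert (Hodd : Free n Od X = 0).
  { set (O := fun w => IZR w * exp (a * Rabs (IZR w))).
    rewrite (Free_ext n Od (fun z => O (z + - X)%Z)).
    2:{ intros z. unfold O, Od. rewrite plus_IZR, opp_IZR. reflexivity. }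
    rewrite Free_shift. replace (X + - X)%Z with 0%Z by ring.
    pose proof (Free_odd n O) as H. assert (forall z, O (- z)%Z = - O z).
    { intros z. unfold O. rewrite opp_IZR, Rabs_Ropp. ring. }
    specialize (H H0 0%Z). simpl in H. lra. }
  set (H := fun z => Xr * exp (a * IZR z) + Xr * exp ((- a) * IZR z) + Od z
     + Xr * exp (a * Xr) * exp (- (2 * a * Xr)) * exp ((2 * a) * IZR z)
     + Xr * exp (a * Xr) * exp (2 * a * Xr) * exp ((- (2 * a)) * IZR z)).
  apply Rle_trans with (Free n H X).
  { apply Free_le. intros z. pose proof (ptwise a Xr (IZR z) Ha HXr) as P.
    unfold H, Od.
    replace (exp (2 * a * (IZR z - Xr))) with (exp (- (2 * a * Xr)) * exp (2 * a * IZR z)) in P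
      by (rewrite <- exp_plus; f_equal; ring).
    replace (exp (- (2 * a * (IZR z - Xr)))) with (exp (2 * a * Xr) * exp (- (2 * a) * IZR z)) in P
      by (rewrite <- exp_plus; f_equal; ring).
    replace (exp (- (a * IZR z))) with (exp (- a * IZR z)) in P by (f_equal; ring).
    lra. }
  unfold H. rewrite !Free_add. rewrite Hodd. rewrite !Free_scal. rewrite !Free_exp.
  rewrite !Ropp_involutive. fold Xr.
  assert (Hi : exp (- (2 * a * Xr)) * exp (2 * a * Xr) = 1) by (rewrite <- exp_plus; replace (- (2 * a * Xr) + 2 * a * Xr) with 0 by ring; apply exp_0).
  set (P := 2 ^ n * exp (8 * a ^ 2 * INR n)).
  assert (B1 : (exp a + exp (- a)) ^ n <= P).
  { eapply Rle_trans. apply pow_bound; auto. unfold P. apply Rmult_le_compat_l. apply pow_le; lra.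
    apply exp_le'. pose proof (pos_INR n). nra. }
  assert (B2 : (exp (2 * a) + exp (- (2 * a))) ^ n <= P).
  { eapply Rle_trans. apply pow_bound; lra. unfold P. apply Rmult_le_compat_l. apply pow_le; lra.
    apply exp_le'. pose proof (pos_INR n). nra. }
  assert (Hm : exp (- a * Xr) <= exp (a * Xr)) by (apply exp_le'; nra).
  pose proof (exp_pos (a * Xr)). pose proof (exp_pos (- a * Xr)).
  assert (0 <= (exp a + exp (- a)) ^ n) by (apply pow_le; pose proof (exp_pos a); pose proof (exp_pos (-a)); lra).
  assert (0 <= (exp (2*a) + exp (- (2*a))) ^ n) by (apply pow_le; pose proof (exp_pos (2*a)); pose proof (exp_pos (-(2*a))); lra).
  replace (exp (- a) + exp a) with (exp a + exp (- a)) by ring.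
  replace (exp (- (2 * a)) + exp (2 * a)) with (exp (2 * a) + exp (- (2 * a))) by ring.
  set (E1 := (exp a + exp (- a)) ^ n) in *. set (E2 := (exp (2 * a) + exp (- (2 * a))) ^ n) in *.
  set (ea := exp (a * Xr)) in *. set (ema := exp (- a * Xr)) in *.
  assert (A1 : Xr * (ea * E1) <= Xr * (ea * P)) by (apply Rmult_le_compat_l; auto; apply Rmult_le_compat_l; lra).
  assert (A2 : Xr * (ema * E1) <= Xr * (ea * P)) by (apply Rmult_le_compat_l; auto; apply Rmult_le_compat; lra).
  assert (A3 : Xr * ea * (exp (- (2 * a * Xr)) * (exp (2 * a * Xr) * E2)) = Xr * ea * E2) by (transitivity (Xr * ea * (exp (- (2 * a * Xr)) * exp (2 * a * Xr)) * E2); [ring | rewrite Hi; ring]).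
  assert (A4 : Xr * ea * exp (2 * a * Xr) * (exp (- (2 * a) * Xr) * E2) = Xr * ea * E2).
  { replace (exp (- (2 * a) * Xr)) with (exp (- (2 * a * Xr))) by (f_equal; ring).
    transitivity (Xr * ea * (exp (- (2 * a * Xr)) * exp (2 * a * Xr)) * E2). ring. rewrite Hi. ring. }
  assert (A5 : Xr * ea * E2 <= Xr * ea * P) by (apply Rmult_le_compat_l; auto; apply Rmult_le_pos; lra).
  replace (Xr * ea * exp (- (2 * a * Xr)) * (exp (2 * a * Xr) * E2)) with (Xr * ea * (exp (- (2 * a * Xr)) * (exp (2 * a * Xr) * E2))) by ring.
  lra.
Qed.

Lemma len_SF (l : list (list Z)) : INR (length l) = SF (fun _ => 1) l.
Proof. induction l; simpl length. reflexivity. rewrite S_INR, IHl. unfold SF; simpl. ring. Qed.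

Lemma EN_eq N x n f : EN N x n f = T N (Z.of_nat x) n f / L N (Z.of_nat x).
Proof. unfold EN. rewrite len_SF. reflexivity. Qed.

Lemma T_one N x n : T N x n (fun _ => 1) = L N x.
Proof. reflexivity. Qed.

Lemma psi_eq y m : psi y m = L m (Z.of_nat y) / 2 ^ m.
Proof.
  rewrite <- (T_one m (Z.of_nat y) m).
  rewrite (claim m m (Z.of_nat y) (y + m)) by lia.
  rewrite Nat.sub_diag. unfold psi.
  rewrite (sum_eq (fun i => 2 ^ m * ph m (Z.of_nat y) i * L 0 (Z.of_nat i) * 1) (fun i => phalf m y i * 2 ^ m)).
  2:{ intros i _. rewrite L_0 by lia. unfold phalf, ph. ring. }
  rewrite <- scal_sum. set (s := sum_f_R0 (phalf m y) (y+m)). change (sum_f_R0 (fun y0 => phalf m y y0) (y+m)) with s. field. apply pow_nonzero; lra.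
Qed.

Lemma partial_eq N n x a M : (n <= N)%nat -> (x + n <= M)%nat ->
  sum_f_R0 (fun y => pfrak N n x y * exp (a * INR y)) M = EN N x n (fun s => exp (a * IZR s)).
Proof.
  intros HN HM. rewrite EN_eq. rewrite (claim n N (Z.of_nat x) M) by lia.
  pose proof (L_pos N (Z.of_nat x) ltac:(lia)) as HL.
  unfold Rdiv. rewrite (Rmult_comm _ (/ _)). rewrite scal_sum.
  apply sum_eq. intros y _. unfold pfrak. rewrite !psi_eq.
  rewrite <- INR_IZR_INZ.
  replace (2 ^ N) with (2 ^ n * 2 ^ (N - n)) by (rewrite <- pow_add; f_equal; lia).
  unfold phalf, ph. field. split; [lra|]. split; apply pow_nonzero; lra.
Qed.

Lemma bound N n x a : (n <= N)%nat -> 0 <= a ->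
  EN N x n (fun s => exp (a * IZR s)) <= 4 * exp (a * INR x + 8 * a ^ 2 * INR n).
Proof.
  intros HN Ha. rewrite EN_eq. set (X := Z.of_nat x). set (M := (x + n)%nat).
  pose proof (L_pos N X ltac:(unfold X; lia)) as HL.
  set (w := fun y => 2 ^ n * ph n X y * (INR y + 1)).
  set (l := ell (N - n)).
  set (g := fun y : nat => exp (a * INR y)).
  assert (HT : T N X n (fun s => exp (a * IZR s)) = sum_f_R0 (fun i => w i * l i * g i) M).
  { rewrite (claim n N X M) by (unfold X, M; lia). apply sum_eq. intros y _.
    unfold w, l, g, ell. rewrite <- INR_IZR_INZ. pose proof (pos_INR y). field. lra. }
  assert (HLs : L N X = sum_f_R0 (fun i => w i * l i) M).
  { rewrite <- (T_one N X n). rewrite (claim n N X M) by (unfold X, M; lia). apply sum_eq. intros y _.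
    unfold w, l, ell. pose proof (pos_INR y). field. lra. }
  assert (Hc := cheb M w l g).
  assert (HSw : sum_f_R0 w M = 2 ^ n * (INR x + 1)).
  { set (Psi1 := fun z : Z => IZR z + 1).
    rewrite (sum_eq _ (fun y => ph n X y * Psi1 (Z.of_nat y) * 2 ^ n)).
    2:{ intros y _. unfold w, Psi1. rewrite <- INR_IZR_INZ. ring. }
    rewrite <- scal_sum. rewrite sum_ph. 2:{ intros z. unfold Psi1. rewrite minus_IZR. ring. } 2: unfold X; lia. 2: unfold X, M; lia.
    unfold Psi1. rewrite Free_lin1. unfold X. rewrite <- INR_IZR_INZ. field. apply pow_nonzero; lra. }
  set (Psi := fun z => (IZR z + 1) * exp (a * Rabs (IZR z + 1)) * exp (- a)).
  assert (HSwg : sum_f_R0 (fun i => w i * g i) M = Free n Psi X).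
  { rewrite (sum_eq _ (fun y => ph n X y * Psi (Z.of_nat y) * 2 ^ n)).
    2:{ intros y _. unfold w, g, Psi. rewrite <- INR_IZR_INZ. pose proof (pos_INR y).
        rewrite Rabs_right by lra.
        replace (exp (a * INR y)) with (exp (a * (INR y + 1)) * exp (- a)) by (rewrite <- exp_plus; f_equal; ring).
        ring. }
    rewrite <- scal_sum. rewrite sum_ph. 2:{ intros z. unfold Psi. rewrite minus_IZR.
      replace (IZR (-2) - IZR z + 1) with (- (IZR z + 1)) by (simpl; ring). rewrite Rabs_Ropp. ring. }
    2: unfold X; lia. 2: unfold X, M; lia.
    field. apply pow_nonzero; lra. }
  assert (HPsi : Free n Psi X = exp (- a) * Free n (fun z => IZR z * exp (a * Rabs (IZR z))) (X + 1)).
  { set (G0 := fun w => IZR w * exp (a * Rabs (IZR w))).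
    rewrite (Free_ext n Psi (fun z => exp (- a) * G0 (z + 1)%Z)).
    2:{ intros z. unfold Psi, G0. rewrite plus_IZR. ring. }
    rewrite Free_scal. rewrite (Free_shift n G0 1%Z). reflexivity. }
  pose proof (Free_G a n (X + 1) Ha ltac:(unfold X; lia)) as HG.
  rewrite plus_IZR in HG. unfold X in HG. rewrite <- INR_IZR_INZ in HG.
  assert (Hw : forall i, (i <= M)%nat -> 0 <= w i).
  { intros i _. unfold w. pose proof (ph_nonneg n X i ltac:(unfold X; lia)). pose proof (pos_INR i).
    apply Rmult_le_pos. apply Rmult_le_pos; auto. apply pow_le; lra. lra. }
  assert (Hl : forall i j, (i <= j)%nat -> (j <= M)%nat -> l j <= l i) by (intros; apply ell_mono; auto).
  assert (Hg : forall i j, (i <= j)%nat -> (j <= M)%nat -> g i <= g j).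
  { intros i j Hij _. unfold g. apply exp_le'. apply Rmult_le_compat_l; auto. apply le_INR; auto. }
  specialize (Hc Hw Hl Hg).
  rewrite <- HT, <- HLs, HSw, HSwg, HPsi in Hc.
  set (P := 2 ^ n * exp (8 * a ^ 2 * INR n)) in *.
  set (Tv := T N X n (fun s => exp (a * IZR s))) in *.
  set (Fv := Free n (fun z => IZR z * exp (a * Rabs (IZR z))) (X + 1)) in *.
  assert (H2n : 0 < 2 ^ n) by (apply pow_lt; lra).
  pose proof (pos_INR x).
  assert (Hea : exp (- a) * (4 * (INR x + 1) * exp (a * (INR x + 1)) * P) = 4 * (INR x + 1) * exp (a * INR x) * P).
  { replace (exp (a * (INR x + 1))) with (exp (a * INR x) * exp a) by (rewrite <- exp_plus; f_equal; ring).
    transitivity (4 * (INR x + 1) * exp (a * INR x) * P * (exp (- a) * exp a)). ring.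
    rewrite <- exp_plus. replace (- a + a) with 0 by ring. rewrite exp_0. ring. }
  assert (HF : exp (- a) * Fv <= 4 * (INR x + 1) * exp (a * INR x) * P).
  { rewrite <- Hea. apply Rmult_le_compat_l. left; apply exp_pos. exact HG. }
  assert (Tv * (2 ^ n * (INR x + 1)) <= 4 * (INR x + 1) * exp (a * INR x) * P * L N X).
  { eapply Rle_trans. exact Hc. apply Rmult_le_compat_r; lra. }
  assert (HTv : Tv <= 4 * exp (a * INR x) * exp (8 * a ^ 2 * INR n) * L N X).
  { unfold P in *. apply (Rmult_le_reg_r (2 ^ n * (INR x + 1))). apply Rmult_lt_0_compat; lra.
    eapply Rle_trans. exact H0. right. ring. }
  apply (Rmult_le_reg_r (L N X)). lra.
  unfold Rdiv. rewrite Rmult_assoc, Rinv_l by lra. rewrite exp_plus. lra.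
Qed.

Theorem proposition3p7 :
  exists C K : R, 0 < C /\ 0 < K /\
    forall (x N n : nat) (a : R),
      (n <= N)%nat -> 0 <= a ->
      infinite_sum (fun y : nat => pfrak N n x y * exp (a * INR y))
                   (EN N x n (fun s => exp (a * IZR s))) /\
      EN N x n (fun s => exp (a * IZR s))
        <= C * exp (a * INR x + K * a ^ 2 * INR n).
Proof.
  exists 4, 8. split; [lra|]. split; [lra|].
  intros x N n a HN Ha. split.
  - intros eps Heps. exists (x + n)%nat. intros m Hm.
    rewrite partial_eq by lia. unfold R_dist. rewrite Rminus_diag, Rabs_R0. lra.
  - apply bound; auto.
Qed.
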